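(* Let $s<d$. For each $M\in\mathbb{N}$ let $\alpha_1,\dots,\alpha_M>0$ and let $B_1,\dots,B_M\in\mathbb{R}^{s\times d}$ be random matrices with all entries independent, $[B_m]_{i,j}\sim\mathcal{N}(0,1/\alpha_m)$ for $i\ne j$ and $[B_m]_{i,i}\sim\mathcal{N}(1/\sqrt{\alpha_m},1/\alpha_m)$. Consider the server model $y=\frac{1}{M}\sum_{m=1}^M B_m\sqrt{\alpha_m}g_m^{sp}(\theta)+\gamma$ with random operator $L_M=\frac{1}{M}(\sqrt{\alpha_1}B_1,\dots,\sqrt{\alpha_M}B_M)$, and the eavesdropper model $y_E=\frac{1}{M}\sum_{m=1}^M H_{E_m}B_m\sqrt{\alpha_m}g_m^{sp}(\theta)+\gamma$ with random operator $L_{E,M}=\frac{1}{M}(\sqrt{\alpha_1}H_{E_1}B_1,\dots,\sqrt{\alpha_M}H_{E_M}B_M)$, where $H_{E_m}\in\mathbb{R}^{s\times s}$ are random matrices with no assumption on their distribution. If for every $M\in\mathbb{N}$ $$\mathbb{E}[\operatorname{cond}(H_{E_1}(C_1+I_{s\times d}),\dots,H_{E_M}(C_M+I_{s\times d}))]>\mathbb{E}[\operatorname{cond}(C_1+I_{s\times d},\dots,C_M+I_{s\times d})],$$ where $C_1,\dots,C_M\in\mathbb{R}^{s\times d}$ have independent $\mathcal{N}(0,1)$ entries, then the server model is inverse secure with respect to the eavesdropper model, i.e. $\mathbb{E}[\operatorname{cond}(L_{E,M})]>\mathbb{E}[\operatorname{cond}(L_M)]$ for all $M\in\mathbb{N}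$.
   Context: For a matrix $X$ with $s$ rows and at least $s$ columns, $\operatorname{cond}(X)=\sigma_1(X)/\sigma_s(X)$, the ratio of its largest and $s$-th largest singular values. $I_{s\times d}$ is the $s\times d$ matrix with ones on the main diagonal and zeros elsewhere; $(X_1,\dots,X_M)$ denotes horizontal concatenation. The vectors $g_m^{sp}(\theta)\in\mathbb{R}^d$ are users' sparsified gradients and $\gamma$ is additive Gaussian noise. A server model with random operator $L_M$ is inverse secure with respect to an eavesdropper model with random operator $L_{E,M}$ if $\mathbb{E}[\operatorname{cond}(L_{E,M})]>\mathbb{E}[\operatorname{cond}(L_M)]$ for all $M\in\mathbb{N}$. *)

(* Defs.v *)
From HB Require Import structures.
From mathcomp Require Import all_boot all_order all_algebra.
From mathcomp Require Import all_classical all_reals all_analysis.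
Set Implicit Arguments. Unset Strict Implicit. Unset Printing Implicit Defensive.
Import Order.TTheory GRing.Theory Num.Theory.
Local Open Scope classical_set_scope.
Local Open Scope ring_scope.

Section Defs.
Context {R : realType}.

Definition gram_ev_max (s n : nat) (X : 'M[R]_(s, n)) : R :=
  sup [set a : R | eigenvalue (X *m X^T) a].
Definition gram_ev_min (s n : nat) (X : 'M[R]_(s, n)) : R :=
  inf [set a : R | eigenvalue (X *m X^T) a].

(* sigma_1(X) and sigma_s(X): singular values are the square roots of the
   eigenvalues of X X^T (X has s rows and at least s columns). *)
Definition sigma_max (s n : nat) (X : 'M[R]_(s, n)) : R :=
  Num.sqrt (gram_ev_max X).
Definition sigma_min (s n : nat) (X : 'M[R]_(s, n)) : R :=
  Num.sqrt (gram_ev_min X).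

Definition cond (s n : nat) (X : 'M[R]_(s, n)) : \bar R :=
  if sigma_min X == 0 then +oo%E else (sigma_max X / sigma_min X)%:E.

Definition hcat (s d M : nat) (X : 'I_M -> 'M[R]_(s, d)) :
  'M[R]_(s, \sum_(m < M) d) := mxrow X.

Context {dT : measure_display} {T : measurableType dT} (P : probability T R).

Definition rv_meas (X : T -> R) := measurable_fun setT X.

Definition mutually_independent (I : finType) (X : I -> T -> R) :=
  forall A : I -> set R, (forall i, measurable (A i)) ->
    P (\bigcap_i (X i @^-1` A i)) = (\prod_(i : I) P (X i @^-1` A i))%E.

(* X has law N(mu, sigma^2), sigma = standard deviation *)
Definition has_normal_law (X : T -> R) (mu sigma : R) :=
  forall A : set R, measurable A -> P (X @^-1` A) = normal_prob mu sigma A.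

Definition random_matrix (s d : nat) (X : T -> 'M[R]_(s, d)) :=
  forall i j, rv_meas (fun w => X w i j).

Definition indep_gaussian_family (s d M : nat) (X : 'I_M -> T -> 'M[R]_(s, d))
    (mean : 'I_M -> 'I_s -> 'I_d -> R) (sd : 'I_M -> R) :=
  (forall m, random_matrix (X m)) /\
  mutually_independent (fun k : 'I_M * 'I_s * 'I_d =>
                          fun w => X k.1.1 w k.1.2 k.2) /\
  (forall m i j, has_normal_law (fun w => X m w i j) (mean m i j) (sd m)).

End Defs.

(* Main.v *)
Require Import Defs.
From HB Require Import structures.
From mathcomp Require Import all_boot all_order all_algebra.
From mathcomp Require Import all_classical all_reals all_analysis.
From mathcomp Require Import measurable_realfun.
From mathcomp Require Import ring lra.
Import Order.TTheory GRing.Theory Num.Theory.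
Import numFieldNormedType.Exports.
Local Open Scope classical_set_scope.
Local Open Scope ring_scope.

Section S.
Context {R : realType}.
Lemma has_sup_scale (E F : set R) k : 0 < k -> (forall a, F a <-> E (a / k)) ->
  has_sup E -> has_sup F.
Proof.
move=> k0 FE [[x Ex] [u ub]]; split.
  by exists (k * x); apply/FE; rewrite mulrAC divff ?mul1r ?gt_eqF.
exists (k * u) => a Fa.
have := ub _ ((FE a).1 Fa); rewrite ler_pdivrMr // => h.
by rewrite mulrC.
Qed.

Lemma sup_scale (E F : set R) k : 0 < k -> (forall a, F a <-> E (a / k)) ->
  sup F = k * sup E.
Proof.
move=> k0 FE.
have EF : forall a, E a <-> F (a / k^-1).
  by move=> a; rewrite FE invrK mulrK ?unitfE ?gt_eqF.
have [hE|hE] := pselect (has_sup E); last first.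
  rewrite (sup_out hE) mulr0 sup_out // => hF; apply: hE.
  by apply: (@has_sup_scale F E k^-1 _ EF hF); rewrite invr_gt0.
have hF := @has_sup_scale E F k k0 FE hE.
apply/le_anti/andP; split.
  apply: ge_sup; first by case: hF.
  move=> a Fa; have := sup_upper_bound hE ((FE a).1 Fa).
  by rewrite ler_pdivrMr // mulrC.
rewrite -ler_pdivlMl // mulrC; apply: ge_sup; first by case: hE.
move=> x Ex; rewrite ler_pdivlMr // mulrC.
apply: sup_upper_bound => //; apply/FE.
by rewrite mulrAC divff ?mul1r ?gt_eqF.
Qed.

Lemma inf_scale (E F : set R) k : 0 < k -> (forall a, F a <-> E (a / k)) ->
  inf F = k * inf E.
Proof.
move=> k0 FE; rewrite /inf mulrN; congr (- _).
apply: sup_scale => // a; split.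
  case=> b Fb <-; exists (b / k); first exact: ((FE b).1 Fb).
  by rewrite mulNr.
case=> b Eb h; exists (- a); last by rewrite opprK.
by apply/(FE (- a)); rewrite mulNr -h opprK.
Qed.
Lemma eigen_scale n (A : 'M[R]_n) k a : k != 0 ->
  eigenvalue (k *: A) a = eigenvalue A (a / k).
Proof.
move=> k0; apply/eigenvalueP/eigenvalueP => -[v h nz]; exists v => //.
  by rewrite -scalemxAr in h; rewrite -[v *m A](scalerK k0) h scalerA mulrC.
by rewrite -scalemxAr h scalerA mulrC divfK.
Qed.

Lemma gram_scale s n c (X : 'M[R]_(s, n)) :
  (c *: X) *m (c *: X)^T = (c ^+ 2) *: (X *m X^T).
Proof. by rewrite linearZ /= -scalemxAr -scalemxAl scalerA expr2. Qed.

Lemma cond_scale s n c (X : 'M[R]_(s, n)) : c != 0 -> cond (c *: X) = cond X.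
Proof.
move=> c0.
have k0 : 0 < c ^+ 2 by rewrite exprn_even_gt0.
have hS : forall a, [set a : R | eigenvalue ((c *: X) *m (c *: X)^T) a] a <->
   [set a : R | eigenvalue (X *m X^T) a] (a / c ^+ 2).
  by move=> a /=; rewrite gram_scale eigen_scale ?gt_eqF.
have emax : gram_ev_max (c *: X) = c ^+ 2 * gram_ev_max X.
  exact: sup_scale.
have emin : gram_ev_min (c *: X) = c ^+ 2 * gram_ev_min X.
  exact: inf_scale.
have q0 : 0 < Num.sqrt (c ^+ 2) by rewrite sqrtr_gt0.
rewrite /cond /sigma_max /sigma_min emax emin !(sqrtrM _ (ltW k0)).
rewrite mulf_eq0 (gt_eqF q0) /=.
case: ifP => // _; congr (_%:E).
by rewrite -mulf_div divff ?mul1r ?gt_eqF.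
Qed.
End S.

Lemma ratio_aux (R : fieldType) (k u v : R) : k != 0 ->
  - (k * u) ^+ 2 / ((k * v) ^+ 2 *+ 2) = - u ^+ 2 / (v ^+ 2 *+ 2).
Proof.
move=> k0; rewrite !exprMn -mulrnAr invfM !mulNr mulrACA divff ?mul1r //.
exact: expf_neq0.
Qed.

Section N.
Context {R : realType}.

Lemma aff_deriv (k b : R) : (fun x : R => k * x - b)^`()%classic = cst k.
Proof.
apply/funext => x; rewrite derive1E deriveB// deriveM// derive_id !derive_cst scaler0 addr0 subr0.
rewrite /cst /=; exact: mulr1.
Qed.

Lemma pdf_aff (k m sg b x : R) : 0 < k -> 0 < sg ->
  normal_pdf (k * m - b) (k * sg) (k * x - b) * k = normal_pdf m sg x.
Proof.
move=> k0 s0.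
rewrite !normal_pdfE ?mulf_neq0 ?gt_eqF //=.
rewrite /normal_peak /normal_fun.
have e1 : - (k * x - b - (k * m - b)) ^+ 2 / ((k * sg) ^+ 2 *+ 2) =
    - (x - m) ^+ 2 / (sg ^+ 2 *+ 2).
  have -> : k * x - b - (k * m - b) = k * (x - m).
    by rewrite opprB addrA subrK mulrBr.
  by rewrite ratio_aux // gt_eqF.
have e2 : Num.sqrt ((k * sg) ^+ 2 * pi *+ 2) = k * Num.sqrt (sg ^+ 2 * pi *+ 2).
  have -> : (k * sg) ^+ 2 * pi *+ 2 = k ^+ 2 * (sg ^+ 2 * pi *+ 2).
    by rewrite exprMn -mulrA -mulrnAr.
  by rewrite sqrtrM ?sqr_ge0 // sqrtr_sqr ger0_norm // ltW.
have S0 : Num.sqrt (sg ^+ 2 * pi *+ 2) != 0.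
  by rewrite gt_eqF // sqrtr_gt0 pmulrn_lgt0 // mulr_gt0 ?pi_gt0 // exprn_gt0.
rewrite e1 e2; set E := expR _; set S := Num.sqrt _.
rewrite mulrAC [_ * k]mulrC invfM mulrA mulfV ?mul1r //.
by rewrite gt_eqF.
Qed.

Lemma aff_meas (k b : R) : measurable_fun setT (fun x : R => k * x - b).
Proof. by apply: measurable_funB => //; apply: measurable_funM. Qed.

Lemma normal_affine (k m sg b : R) (A : set R) : 0 < k -> 0 < sg ->
  measurable A ->
  normal_prob m sg ((fun x => k * x - b) @^-1` A) = normal_prob (k * m - b) (k * sg) A.
Proof.
move=> k0 s0 mA.
pose f x := k * x - b.
have mf : measurable_fun setT f := aff_meas k b.
have df x : derivable f x 1.
  by apply: derivableB => //; apply: derivableM.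
have cf (x : R) : {for x, continuous f}.
  by apply/differentiable_continuous; rewrite -derivable1_diffP; exact: df.
pose g := (f : measurableTypeR R -> measurableTypeR R).
have mg : measurable_fun setT g := mf.
have -> : normal_prob m sg (f @^-1` A) = pushforward (normal_prob m sg) g A by [].
pose m2' : {measure set (measurableTypeR R) -> \bar R} := pushforward (normal_prob m sg) g.
pose m2 := m2' mg.
pose m1 : {measure set (measurableTypeR R) -> \bar R} := normal_prob (k * m - b) (k * sg).
symmetry.
change (m1 A = m2 A).
apply: (@measure_unique _ R (measurableTypeR R) (@ocitv R) (fun n : nat => `]-(n%:R), n%:R]%classic) _ _ _ _ m1 m2) => //.
- exact: (@ocitvI R).
- by move=> n; exact: is_ocitv.
- apply/seteqP; split => // x _ /=.
  have := archi_boundP (normr_ge0 x); set n := Num.bound _ => hx.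
  exists n => //=; rewrite in_itv /=.
  move: hx; rewrite ltr_norml => /andP[h1 h2]; by rewrite h1 ltW.
- move=> _ [[a c] _ <-] /=.
  have [ac|ca] := ltP a c; last first.
    rewrite set_itv_ge ?measure0 //.
    by rewrite bnd_simp -leNgt.
  set lo := (a + b) / k; set hi := (c + b) / k.
  have k0' : k != 0 by rewrite gt_eqF.
  have flo : f lo = a by rewrite /f /lo mulrC divfK // addrK.
  have fhi : f hi = c by rewrite /f /hi mulrC divfK // addrK.
  have lohi : lo < hi by rewrite /lo /hi ltr_pM2r ?invr_gt0 // ltrD2r.
  have pre : g @^-1` `]a, c] = `]lo, hi]%classic.
    apply/seteqP; split => x /=; rewrite !in_itv /= => /andP[h1 h2]; apply/andP; split.
    - rewrite /lo ltr_pdivrMr // mulrC; move: h1; rewrite /g /f; lra.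
    - rewrite /hi ler_pdivlMr // mulrC; move: h2; rewrite /g /f; lra.
    - move: h1; rewrite /g /f /lo ltr_pdivrMr // mulrC; lra.
    - move: h2; rewrite /g /f /hi ler_pdivlMr // mulrC; lra.
  rewrite /m2 /m1 /= /pushforward /normal_prob pre.
  rewrite !integral_itv_obnd_cbnd; first last.
  - by apply/measurable_funTS/measurable_EFinP; exact: measurable_normal_pdf.
  - by apply/measurable_funTS/measurable_EFinP; exact: measurable_normal_pdf.
  have sub := @integration_by_substitution_increasing R f
    (normal_pdf (k * m - b) (k * sg)) lo hi (ltW lohi).
  rewrite flo fhi in sub.
  rewrite sub; last first.
  - apply: continuous_subspaceT; apply: continuous_normal_pdf.
    by rewrite mulf_neq0 // gt_eqF.
  - split.
    + by move=> x _; exact: df.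
    + exact/cvg_at_right_filter/cf.
    + exact/cvg_at_left_filter/cf.
  - by rewrite aff_deriv; exact: is_cvg_cst.
  - by rewrite aff_deriv; exact: is_cvg_cst.
  - by rewrite aff_deriv => x _; exact: cst_continuous.
  - by move=> x y _ _ xy; rewrite /f ltrD2r ltr_pM2l.
  apply: eq_integral => x _; congr (_%:E).
  rewrite aff_deriv; change (normal_pdf (k * m - b) (k * sg) (k * x - b) * k = normal_pdf m sg x).
  exact: pdf_aff.
- move=> n; rewrite (le_lt_trans (probability_le1 _ _)) ?ltry //.
Qed.

End N.

Theorem proposition5 (R : realType) (dT : measure_display) (T : measurableType dT)
  (P : probability T R) (s d : nat)
  (alpha : forall M : nat, 'I_M -> R)
  (B : forall M : nat, 'I_M -> T -> 'M[R]_(s, d))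
  (H : forall M : nat, 'I_M -> T -> 'M[R]_(s, s)) :
  (0 < s)%N -> (s < d)%N ->
  (forall M (m : 'I_M), 0 < alpha M m) ->
  (forall M, (0 < M)%N ->
     indep_gaussian_family P (B M)
       (fun m i j => if val i == val j then (Num.sqrt (alpha M m))^-1 else 0)
       (fun m => Num.sqrt ((alpha M m)^-1))) ->
  (forall M (m : 'I_M), random_matrix (H M m)) ->
  (forall M, (0 < M)%N ->
     forall C : 'I_M -> T -> 'M[R]_(s, d),
       indep_gaussian_family P C (fun _ _ _ => 0) (fun _ => 1) ->
       (\int[P]_w cond (hcat (fun m => (C m w + pid_mx s)%R))
        < \int[P]_w cond (hcat (fun m => H M m w *m (C m w + pid_mx s)%R)))%E) ->
  forall M, (0 < M)%N ->
    (\int[P]_w cond ((M%:R)^-1 *: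
         hcat (fun m => Num.sqrt (alpha M m) *: B M m w))%R
     < \int[P]_w cond ((M%:R)^-1 *:
         hcat (fun m => Num.sqrt (alpha M m) *: (H M m w *m B M m w)))%R)%E.
Proof.
move=> s0 sd apos hB hH hC M M0.
pose ka (m : 'I_M) := Num.sqrt (alpha M m).
have ka0 m : 0 < ka m by rewrite sqrtr_gt0.
pose del (i : 'I_s) (j : 'I_d) : R := (pid_mx s : 'M[R]_(s, d)) i j.
pose aff (k : 'I_M * 'I_s * 'I_d) (x : R) := ka k.1.1 * x - del k.1.2 k.2.
pose C (m : 'I_M) (w : T) := ka m *: B M m w - pid_mx s.
have Centry k : (fun w => C k.1.1 w k.1.2 k.2) = aff k \o (fun w => B M k.1.1 w k.1.2 k.2).
  by apply/funext => w; rewrite /C /aff /del /= !mxE.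
have [hBr [hBi hBn]] := hB M M0.
have hCg : indep_gaussian_family P C (fun _ _ _ => 0) (fun _ => 1).
  split; [|split].
  - move=> m i j; have := Centry (m, i, j) => /= ->.
    rewrite /rv_meas; apply: measurableT_comp; [exact: aff_meas|exact: hBr].
  - move=> A mA.
    have mA' k : measurable (aff k @^-1` A k).
      by rewrite -[X in measurable X]setTI; apply: aff_meas.
    have := hBi (fun k => aff k @^-1` A k) mA'.
    have -> : \bigcap_k ((fun w => C k.1.1 w k.1.2 k.2) @^-1` A k) =
      \bigcap_k ((fun w => B M k.1.1 w k.1.2 k.2) @^-1` (aff k @^-1` A k)).
      by apply: eq_bigcapr => k _; rewrite Centry.
    move=> ->; apply: eq_bigr => k _; by rewrite Centry.
  - move=> m i j A mA; have := Centry (m, i, j) => /= ->.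
    rewrite comp_preimage hBn; last first.
      by rewrite -[X in measurable X]setTI; apply: aff_meas.
    rewrite /aff /= normal_affine //; last by rewrite sqrtr_gt0 invr_gt0.
    congr normal_prob.
      rewrite /del mxE ltn_ord andbT /ka; case: eqP => _ /=.
        by rewrite divff ?subrr // gt_eqF // sqrtr_gt0.
      by rewrite mulr0 subrr.
    by rewrite /ka -sqrtrM ?ltW // divff ?sqrtr1 // gt_eqF.
have MN : (M%:R : R)^-1 != 0 by rewrite invr_eq0 pnatr_eq0 -lt0n.
have E1 w : cond ((M%:R)^-1 *: hcat (fun m => Num.sqrt (alpha M m) *: B M m w))%R
    = cond (hcat (fun m => (C m w + pid_mx s)%R)).
  have := @cond_scale R s _ (M%:R^-1) (hcat (fun m => Num.sqrt (alpha M m) *: B M m w)) MN.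
  move=> ->.
  have -> : (fun m => (C m w + pid_mx s)%R) = (fun m => Num.sqrt (alpha M m) *: B M m w).
    apply/funext => m. rewrite /C. exact: subrK.
  reflexivity.
have E2 w : cond ((M%:R)^-1 *: hcat (fun m => Num.sqrt (alpha M m) *: (H M m w *m B M m w)))%R
    = cond (hcat (fun m => H M m w *m (C m w + pid_mx s)%R)).
  have := @cond_scale R s _ (M%:R^-1) (hcat (fun m => Num.sqrt (alpha M m) *: (H M m w *m B M m w))) MN.
  move=> ->.
  have -> : (fun m => H M m w *m (C m w + pid_mx s)%R) = (fun m => Num.sqrt (alpha M m) *: (H M m w *m B M m w)).
    apply/funext => m. rewrite /C /ka subrK. by rewrite scalemxAr.
  reflexivity.
have I1 : (\int[P]_w cond ((M%:R)^-1 *: hcat (fun m => Num.sqrt (alpha M m) *: B M m w))%R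
   = \int[P]_w cond (hcat (fun m => (C m w + pid_mx s)%R)))%E.
  by apply: eq_integral => w _; exact: E1.
have I2 : (\int[P]_w cond ((M%:R)^-1 *: hcat (fun m => Num.sqrt (alpha M m) *: (H M m w *m B M m w)))%R
   = \int[P]_w cond (hcat (fun m => H M m w *m (C m w + pid_mx s)%R)))%E.
  by apply: eq_integral => w _; exact: E2.
have h := hC M M0 C hCg.
have lt_congr (a b c e : \bar R) : a = c -> b = e -> (c < e)%E -> (a < b)%E.
  by move=> -> ->.
exact: (lt_congr _ _ _ _ I1 I2 h).
Qed.
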